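(* Let $A\in M_n(\mathbb{Z})$ be invertible such that $x\mapsto A^{-1}x$ is a similarity with respect to Euclidean distance, and let $D\subset\mathbb{Z}^n$ be a subset of a complete residue system mod $A$. Let $\alpha\in T_{A,D-D}$ have a unique $(A,D-D)$-representation $(\alpha_j)_{j\ge1}$, and suppose there exist a positive integer $p$, finite sets $U_1,\dots,U_p,V_1,\dots,V_p\subset\mathbb{R}^n$ and $(\beta_j)_{j\ge1}\in D^{\mathbb{N}}$ with $(D\cap(D+\alpha_j))-\beta_j=U_j$ for $1\le j\le p$ and $(D\cap(D+\alpha_j))-\beta_j=U_\ell+V_\ell$ for $j>p$, $j\equiv\ell \pmod p$, $\ell\in\{1,\dots,p\}$. Consider the IFS consisting precisely of the (distinct) maps $$f(x)=A^{-p}\Big(x+\sum_{\ell=1}^p\big(A^{p-\ell}u_\ell+A^{-\ell}v_\ell\big)\Big),\qquad u_\ell\in U_\ell,\ v_\ell\in V_\ell\ (\ell=1,\dots,p).$$ If this IFS satisfies the open set condition, then it satisfies the strong separation condition.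
   Context: A similarity means a map $f$ with $\|f(x)-f(y)\|=c\|x-y\|$ for some $c\in(0,1)$ and all $x,y$. For finite $E\subset\mathbb{R}^n$, $\pi_{A,E}((e_j)_{j\ge1})=\sum_{j\ge1}A^{-j}e_j$, $T_{A,E}=\pi_{A,E}(E^{\mathbb{N}})$, and an $(A,E)$-representation of $x$ is a sequence $(e_j)\in E^{\mathbb{N}}$ with $\pi_{A,E}((e_j))=x$. $D+t=\{d+t:d\in D\}$, $U+V=\{u+v\}$ (Minkowski sum). A complete residue system mod $A$ is a set $\mathcal{D}\subset\mathbb{Z}^n$ mapping bijectively onto $\mathbb{Z}^n/A\mathbb{Z}^n$. An IFS $\{f_i\}_{i=1}^N$ with attractor $K$ satisfies the open set condition if there is a nonempty bounded open set $V$ with $\bigcup_i f_i(V)\subset V$ and the $f_i(V)$ pairwise disjoint; it satisfies the strong separation condition if the sets $f_i(K)$ are pairwise disjoint. *)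

(* Defs.v *)
From HB Require Import structures.
From mathcomp Require Import all_boot all_order all_algebra.
From mathcomp Require Import all_classical all_reals all_analysis.
Set Implicit Arguments. Unset Strict Implicit. Unset Printing Implicit Defensive.
Import Order.TTheory GRing.Theory Num.Theory.
Import numFieldNormedType.Exports.
Local Open Scope classical_set_scope.
Local Open Scope ring_scope.

Section Defs.
Variables (R : realType) (n : nat).

Definition toR (x : 'cV[int]_n) : 'cV[R]_n := map_mx (fun z : int => z%:~R) x.
Definition matR (A : 'M[int]_n) : 'M[R]_n := map_mx (fun z : int => z%:~R) A.

Definition enorm (x : 'cV[R]_n) : R := Num.sqrt (\sum_i (x i 0) ^+ 2).

Definition is_similarity (M : 'M[R]_n) : Prop :=
  exists c : R, 0 < c < 1 /\
    forall x y : 'cV[R]_n, enorm (M *m x - M *m y) = c * enorm (x - y).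

(* pi_{A,E}((e_j)_{j>=1}) = sum_{j>=1} A^{-j} e_j  (index 0 of e is ignored) *)
Definition piAE (A : 'M[int]_n) (e : nat -> 'cV[int]_n) : 'cV[R]_n :=
  limn (fun N => \sum_(1 <= j < N) ((invmx (matR A)) ^+ j *m toR (e j))).

Definition is_repr (A : 'M[int]_n) (E : set 'cV[int]_n)
    (e : nat -> 'cV[int]_n) (x : 'cV[R]_n) : Prop :=
  (forall j, (0 < j)%N -> E (e j)) /\ piAE A e = x.

Definition TAE (A : 'M[int]_n) (E : set 'cV[int]_n) : set 'cV[R]_n :=
  [set x | exists e, is_repr A E e x].

Definition congr_mod (A : 'M[int]_n) (x y : 'cV[int]_n) : Prop :=
  exists z : 'cV[int]_n, x - y = A *m z.

Definition complete_residue_system (A : 'M[int]_n) (Dc : set 'cV[int]_n) : Prop :=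
  (forall x y, Dc x -> Dc y -> congr_mod A x y -> x = y) /\
  (forall z, exists2 x, Dc x & congr_mod A z x).

Definition set_diff (D : set 'cV[int]_n) : set 'cV[int]_n :=
  [set x - y | x in D & y in D].

Definition set_translate (D : set 'cV[int]_n) (t : 'cV[int]_n) : set 'cV[int]_n :=
  [set d + t | d in D].

Definition mink_sum (U V : set 'cV[R]_n) : set 'cV[R]_n :=
  [set u + v | u in U & v in V].

(* IFS given as the set of its (distinct) maps *)
Definition is_attractor (F : set ('cV[R]_n -> 'cV[R]_n)) (K : set 'cV[R]_n) : Prop :=
  compact K /\ K !=set0 /\ K = \bigcup_(f in F) (f @` K).

Definition bounded_enorm (V : set 'cV[R]_n) : Prop :=
  exists M : R, forall x, V x -> enorm x <= M.

Definition open_set_condition (F : set ('cV[R]_n -> 'cV[R]_n)) : Prop :=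
  exists V : set 'cV[R]_n, V !=set0 /\ bounded_enorm V /\ open V /\
    (\bigcup_(f in F) (f @` V) `<=` V) /\
    (forall f g, F f -> F g -> f <> g -> (f @` V) `&` (g @` V) = set0).

Definition strong_separation_condition (F : set ('cV[R]_n -> 'cV[R]_n)) : Prop :=
  forall K, is_attractor F K ->
    forall f g, F f -> F g -> f <> g -> (f @` K) `&` (g @` K) = set0.

Definition thm_ifs (A : 'M[int]_n) (p : nat) (U V : nat -> set 'cV[R]_n)
  : set ('cV[R]_n -> 'cV[R]_n) :=
  [set f | exists u v : nat -> 'cV[R]_n,
     (forall l, (1 <= l <= p)%N -> U l (u l) /\ V l (v l)) /\
     f = (fun x => (invmx (matR A)) ^+ p *m
            (x + \sum_(1 <= l < p.+1)
                   ((matR A) ^+ (p - l) *m u l + (invmx (matR A)) ^+ l *m v l)))].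

End Defs.

(* Main.v *)
Require Import Defs.
From HB Require Import structures.
From mathcomp Require Import all_boot all_order all_algebra.
From mathcomp Require Import all_classical all_reals all_analysis.
Import Order.TTheory GRing.Theory Num.Theory.
Import numFieldNormedType.Exports.
Local Open Scope classical_set_scope.
Local Open Scope ring_scope.
Set Implicit Arguments. Unset Strict Implicit. Unset Printing Implicit Defensive.
Section Norms.
Variables (R : realType) (n : nat).
Implicit Types x y : 'cV[R]_n.

Lemma entry_le_mxnorm x i j : `|x i j| <= `|x|.
Proof.
rewrite (_ : `|x| = mx_norm x) // mx_normrE; apply/bigmax_geP; right => /=; by exists (i, j).
Qed.

Lemma entry_le_enorm x i : `|x i 0| <= enorm x.
Proof.
rewrite /enorm -sqrtr_sqr ler_sqrt; last by apply: sumr_ge0 => k _; exact: sqr_ge0.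
rewrite (bigD1 i) //= lerDl; apply: sumr_ge0 => k _; exact: sqr_ge0.
Qed.

Lemma mxnorm_le_enorm x : `|x| <= enorm x.
Proof.
rewrite (_ : `|x| = mx_norm x) // mx_normrE; apply/bigmax_leP; split; first exact: sqrtr_ge0.
move=> [i j] _ /=; rewrite (ord1 j); exact: entry_le_enorm.
Qed.

Lemma enorm_le_mxnorm x : enorm x <= n%:R * `|x|.
Proof.
rewrite /enorm.
have h0 : 0 <= n%:R * `|x| by rewrite mulr_ge0.
rewrite -(ger0_norm h0) -sqrtr_sqr ler_sqrt; last exact: sqr_ge0.
apply: (@le_trans _ _ (\sum_(i < n) `|x|^+2)).
  apply: ler_sum => i _; rewrite -real_normK ?num_real //; apply: lerXn2r; rewrite ?nnegrE //.
  exact: entry_le_mxnorm.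
rewrite sumr_const card_ord exprMn -[_ *+ n]mulr_natl; apply: ler_wpM2r; [exact: sqr_ge0|].
rewrite -natrX ler_nat; case: n => // m; rewrite expnS leq_pmulr // expn_gt0.
Qed.

Lemma enorm0 : enorm (0 : 'cV[R]_n) = 0.
Proof. by rewrite /enorm big1 ?sqrtr0 // => i _; rewrite mxE expr0n. Qed.

Lemma enorm_ge0 x : 0 <= enorm x.
Proof. exact: sqrtr_ge0. Qed.
End Norms.
Section Alg.
Variables (R : realType) (n : nat) (A : 'M[int]_n).
Local Notation Ai := (invmx (matR R A)).
Local Notation MA := (matR R A).

Lemma MA_unit : \det A != 0 -> MA \in unitmx.
Proof.
move=> hd; rewrite unitmxE unitfE.
have -> : MA = map_mx intr A by [].
by rewrite det_map_mx intr_eq0.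
Qed.

Lemma powAiA (hd : \det A != 0) m : Ai ^+ m *m MA ^+ m = 1%:M.
Proof.
elim: m => [|m IH]; first by rewrite !expr0 mul1mx.
rewrite exprSr exprS mulmxE -mulrA (mulrA Ai) -mulmxE (mulVmx (MA_unit hd)).
by rewrite mulmxE idmxE mul1r -mulmxE.
Qed.

Lemma key_pow (hd : \det A != 0) l p : (l <= p)%N -> Ai ^+ p *m MA ^+ (p - l) = Ai ^+ l.
Proof.
move=> hl; rewrite -{1}(subnKC hl) exprD -mulmxE -mulmxA powAiA // mulmx1 //.
Qed.

Lemma sim_decay c : (forall x y : 'cV[R]_n, enorm (Ai *m x - Ai *m y) = c * enorm (x - y)) ->
  forall k (x : 'cV[R]_n), enorm (Ai ^+ k *m x) = c ^+ k * enorm x.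
Proof.
move=> hs; elim=> [|k IH] x; first by rewrite expr0 mul1mx mul1r.
rewrite exprS -mulmxE -mulmxA.
have := hs (Ai ^+ k *m x) 0; rewrite mulmx0 !subr0 => ->.
by rewrite IH exprS mulrA.
Qed.
End Alg.
Section IFS.
Variables (R : realType) (n : nat) (A : 'M[int]_n) (p : nat).
Hypothesis hd : \det A != 0.
Local Notation Ai := (invmx (matR R A)).
Local Notation MA := (matR R A).

Lemma powD (M : 'M[R]_n) a b : M ^+ a *m M ^+ b = M ^+ (a + b).
Proof. by rewrite exprD. Qed.

Definition fm (u v : nat -> 'cV[R]_n) : 'cV[R]_n -> 'cV[R]_n :=
  fun x => (invmx (matR R A)) ^+ p *m
            (x + \sum_(1 <= l < p.+1)
                   ((matR R A) ^+ (p - l) *m u l + (invmx (matR R A)) ^+ l *m v l)).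

Lemma fm_expand u v x : fm u v x = Ai ^+ p *m x +
  (\sum_(1 <= l < p.+1) Ai ^+ l *m u l + \sum_(1 <= l < p.+1) Ai ^+ (p + l) *m v l).
Proof.
rewrite /fm mulmxDr mulmx_sumr -big_split /=; congr (_ + _).
rewrite big_nat_cond [RHS]big_nat_cond; apply: eq_bigr => l /andP[/andP[_ hl] _].
by rewrite mulmxDr !mulmxA key_pow // powD.
Qed.

Lemma fm_comp a b c d x : fm a b (fm c d x) = Ai ^+ (p + p) *m x +
  (\sum_(1 <= l < p.+1) Ai ^+ l *m a l +
   \sum_(1 <= l < p.+1) Ai ^+ (p + l) *m (b l + c l) +
   \sum_(1 <= l < p.+1) Ai ^+ (p + p + l) *m d l).
Proof.
rewrite fm_expand (fm_expand c) mulmxDr mulmxA powD mulmxDr !mulmx_sumr.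
rewrite [\sum_(1 <= i < p.+1) Ai ^+ p *m (Ai ^+ i *m c i)](eq_bigr (fun i => Ai ^+ (p + i) *m c i)); last by move=> i _; rewrite mulmxA powD.
rewrite [\sum_(1 <= i < p.+1) Ai ^+ p *m (Ai ^+ (p + i) *m d i)](eq_bigr (fun i => Ai ^+ (p + p + i) *m d i)); last by move=> i _; rewrite mulmxA powD addnA.
rewrite [\sum_(1 <= l < p.+1) Ai ^+ (p + l) *m (b l + c l)](eq_bigr (fun l => Ai ^+ (p + l) *m b l + Ai ^+ (p + l) *m c l)); last by move=> i _; rewrite mulmxDr.
rewrite big_split /=.
set S1 := \sum_(1 <= i < p.+1) _ *m c i.
set S2 := \sum_(1 <= i < p.+1) _ *m d i.
set S3 := \sum_(1 <= i < p.+1) _ *m a i.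
set S4 := \sum_(1 <= i < p.+1) _ *m b i.
rewrite -!addrA; congr (_ + _).
by rewrite addrA addrC -!addrA.
Qed.
End IFS.
Section Coding.
Variables (R : realType) (n : nat) (A : 'M[int]_n) (p : nat).
Hypothesis hd : \det A != 0.
Hypothesis hp : (0 < p)%N.
Local Notation Ai := (invmx (matR R A)).
Variables (uu vv : nat -> nat -> 'cV[R]_n).

Definition vp k : nat -> 'cV[R]_n := if k is k'.+1 then vv k' else (fun _ => 0).
Definition dig j := uu (j.-1 %/ p) (j.-1 %% p).+1 + vp (j.-1 %/ p) (j.-1 %% p).+1.
Definition PS N := \sum_(1 <= j < N) Ai ^+ j *m dig j.

Lemma dig_block k l : (1 <= l <= p)%N -> dig (k * p + l) = uu k l + vp k l.
Proof.
case/andP=> l1 lp; rewrite /dig.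
have e : (k * p + l).-1 = k * p + l.-1 by rewrite -(prednK l1) addnS.
have lp' : (l.-1 < p)%N by rewrite (leq_trans _ lp) // prednK.
rewrite e divnMDl // divn_small // addn0 modnMDl modn_small // prednK //.
Qed.

Lemma PS_block k : PS (k.+1 * p).+1 =
  PS (k * p).+1 + \sum_(1 <= l < p.+1) Ai ^+ (k * p + l) *m (uu k l + vp k l).
Proof.
rewrite /PS (@big_cat_nat _ _ _ (k * p).+1) //=; last by rewrite ltnS leq_mul2r leqnSn orbT.
congr (_ + _).
rewrite -[(k * p).+1]add1n big_addn.
have -> : ((k.+1 * p).+1 - k * p = p.+1)%N by rewrite mulSn -addSn addnK.
rewrite big_nat_cond [RHS]big_nat_cond; apply: eq_bigr => l /andP[hl _].
by rewrite addnC dig_block.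
Qed.

Variable ys : nat -> 'cV[R]_n.
Hypothesis hys : forall k, ys k = fm A p (uu k) (vv k) (ys k.+1).

Lemma acl (a b c d : 'cV[R]_n) : a + (b + (c + d)) = c + a + (d + b).
Proof. by rewrite [b + _]addrCA [LHS]addrCA -addrA (addrC d). Qed.

Definition TT k := \sum_(1 <= l < p.+1) Ai ^+ l *m vp k l + ys k.

Lemma coding_inv k : ys 0 = PS (k * p).+1 + Ai ^+ (k * p) *m TT k.
Proof.
elim: k => [|k IH].
  rewrite mul0n expr0 mul1mx /PS big_geq // add0r /TT big1 ?add0r // => l _.
  by rewrite /= mulmx0.
rewrite IH PS_block -addrA; congr (_ + _).
rewrite /TT hys fm_expand // mulmxDr !mulmx_sumr mulmxDr mulmxA powD mulmxDr !mulmx_sumr.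
have e1 : (k.+1 * p = k * p + p)%N by rewrite mulSn addnC.
rewrite e1 mulmxDr mulmx_sumr /=.
rewrite [\sum_(1 <= l < p.+1) Ai ^+ (k * p + l) *m (uu k l + vp k l)](eq_bigr (fun l => Ai ^+ (k * p + l) *m uu k l + Ai ^+ (k * p + l) *m vp k l));
  last by move=> l _; rewrite mulmxDr.
rewrite big_split /=.
rewrite [\sum_(1 <= i < p.+1) Ai ^+ (k * p) *m (Ai ^+ i *m vp k i)](eq_bigr (fun l => Ai ^+ (k * p + l) *m vp k l)); last by move=> l _; rewrite mulmxA powD.
rewrite [\sum_(1 <= i < p.+1) Ai ^+ (k * p) *m (Ai ^+ i *m uu k i)](eq_bigr (fun l => Ai ^+ (k * p + l) *m uu k l)); last by move=> l _; rewrite mulmxA powD.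
rewrite [\sum_(1 <= i < p.+1) Ai ^+ (k * p) *m (Ai ^+ (p + i) *m vv k i)](eq_bigr (fun l => Ai ^+ (k * p + p + l) *m vv k l)); last by move=> l _; rewrite mulmxA powD addnA.
rewrite [\sum_(1 <= i < p.+1) Ai ^+ (k * p + p) *m (Ai ^+ i *m _)](eq_bigr (fun l => Ai ^+ (k * p + p + l) *m vv k l)); last by move=> l _; rewrite mulmxA powD.
by rewrite acl.
Qed.
End Coding.
Section Decay.
Variables (R : realType) (n : nat) (A : 'M[int]_n) (c : R).
Local Notation Ai := (invmx (matR R A)).
Hypothesis hc : 0 < c < 1.
Hypothesis hs : forall k (x : 'cV[R]_n), enorm (Ai ^+ k *m x) = c ^+ k * enorm x.

Lemma mx_decay k (x : 'cV[R]_n) : `|Ai ^+ k *m x| <= n%:R * c ^+ k * `|x|.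
Proof.
case/andP: hc => c0 c1.
apply: (le_trans (mxnorm_le_enorm _)); rewrite hs.
rewrite -mulrA mulrCA; apply: ler_wpM2l; [by rewrite exprn_ge0 // ltW|exact: enorm_le_mxnorm].
Qed.

Lemma to0 (r : nat -> 'cV[R]_n) C : (forall N, `|r N| <= C * c ^+ N) -> r @ \oo --> (0 : 'cV[R]_n).
Proof.
case/andP: hc => c0 c1 hr.
have hg : (fun N => C * c ^+ N) @ \oo --> (0 : R).
  rewrite -(mulr0 C); apply: cvgMl_tmp; apply: cvg_expr; by rewrite ger0_norm ?ltW.
apply/cvgr0Pnorm_le => e e0.
move/cvgr0_norm_le: hg => /(_ e e0); apply: filterS => N /=.
apply: le_trans; apply: (le_trans (hr N)); exact: ler_norm.
Qed.
End Decay.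
Section Conv.
Variables (R : realType) (n : nat) (A : 'M[int]_n) (p : nat) (c : R).
Hypothesis hd : \det A != 0.
Hypothesis hp : (0 < p)%N.
Local Notation Ai := (invmx (matR R A)).
Hypothesis hc : 0 < c < 1.
Hypothesis hs : forall k (x : 'cV[R]_n), enorm (Ai ^+ k *m x) = c ^+ k * enorm x.
Variables (uu vv : nat -> nat -> 'cV[R]_n) (ys : nat -> 'cV[R]_n).
Hypothesis hys : forall k, ys k = fm A p (uu k) (vv k) (ys k.+1).
Variables (BD BT : R).
Hypothesis BD0 : 0 <= BD.
Hypothesis hBD : forall j, (0 < j)%N -> `|dig p uu vv j| <= BD.
Hypothesis hBT : forall k, `|TT A p vv ys k| <= BT.

Lemma PS_err N : `|ys 0 - PS A p uu vv N.+1| <=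
   n%:R * (BT + p%:R * BD) / c ^+ p * c ^+ N.+1.
Proof.
case/andP: hc => c0 c1.
set k := (N %/ p)%N.
have hN : N = (k * p + N %% p)%N by rewrite /k -divn_eq.
have hle : ((k * p).+1 <= N.+1)%N by rewrite ltnS {1}hN leq_addr.
have hsp : PS A p uu vv N.+1 = PS A p uu vv (k * p).+1 +
    \sum_((k * p).+1 <= j < N.+1) Ai ^+ j *m dig p uu vv j.
  by rewrite /PS (@big_cat_nat _ _ _ (k * p).+1).
rewrite (coding_inv hd hp hys k) hsp opprD addrA (addrC (PS A p uu vv (k * p).+1)) addrK.
have cge0 : 0 <= c by rewrite ltW.
have hX : 0 <= n%:R * c ^+ (k * p) by rewrite mulr_ge0 // exprn_ge0.
have hY : 0 <= BT + p%:R * BD.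
  by rewrite addr_ge0 ?mulr_ge0 // (le_trans (normr_ge0 _) (hBT 0)).
apply: (@le_trans _ _ (n%:R * c ^+ (k * p) * (BT + p%:R * BD))).
  rewrite mulrDr; apply: (le_trans (ler_normB _ _)); apply: lerD.
    apply: (le_trans (mx_decay hc hs _ _)); exact: ler_wpM2l.
  apply: (le_trans (ler_norm_sum _ _ _)).
  apply: (@le_trans _ _ (\sum_((k * p).+1 <= j < N.+1) n%:R * c ^+ (k * p) * BD)).
    rewrite big_nat_cond [X in _ <= X]big_nat_cond; apply: ler_sum => j /andP[/andP[hj1 hj2] _].
    apply: (le_trans (mx_decay hc hs _ _)); rewrite -mulrA -[X in _ <= X]mulrA.
    apply: ler_wpM2l => //; apply: ler_pM => //; first by rewrite exprn_ge0.
      by apply: ler_wiXn2l => //; [rewrite ltW | exact: ltnW].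
    by apply: hBD; apply: leq_trans hj1.
  rewrite sumr_const_nat -[_ *+ (N.+1 - _)]mulr_natr mulrAC [X in _ <= X]mulrA; apply: ler_wpM2r => //; apply: ler_wpM2l => //.
  rewrite ler_nat subSS {1}hN addKn; exact/ltnW/ltn_pmod.
have hck : c ^+ (k * p) <= c ^+ N.+1 / c ^+ p.
  rewrite ler_pdivlMr ?exprn_gt0 // -exprD; apply: ler_wiXn2l => //; first by rewrite ltW.
  by rewrite {1}hN -addnS leq_add2l ltn_pmod.
have -> : n%:R * (BT + p%:R * BD) / c ^+ p * c ^+ N.+1 =
  n%:R * (c ^+ N.+1 / c ^+ p) * (BT + p%:R * BD).
  by rewrite mulrAC -!mulrA; congr (_ * _); rewrite mulrC mulrA.
by apply: ler_wpM2r => //; apply: ler_wpM2l.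
Qed.
Lemma PS_cvg : PS A p uu vv @ \oo --> ys 0.
Proof.
rewrite -cvg_shiftS; apply: cvg_zero.
apply: (@to0 _ _ c hc _ (n%:R * (BT + p%:R * BD) / c ^+ p * c)) => N /=.
rewrite -normrN opprB -mulrA -exprS; exact: PS_err.
Qed.
End Conv.
Definition valid (R : realType) (n : nat) (p : nat) (U V : nat -> set 'cV[R]_n)
  (u v : nat -> 'cV[R]_n) := forall l, (1 <= l <= p)%N -> U l (u l) /\ V l (v l).

Lemma ifs_mem (R : realType) (n : nat) (A : 'M[int]_n) p (U V : nat -> set 'cV[R]_n) (f : 'cV[R]_n -> 'cV[R]_n) :
  thm_ifs A p U V f -> exists u v, valid p U V u v /\ f = fm A p u v.
Proof. by case=> u [v [hv ->]]; exists u, v. Qed.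

Lemma fm_mem (R : realType) (n : nat) (A : 'M[int]_n) p (U V : nat -> set 'cV[R]_n) u v :
  valid p U V u v -> thm_ifs A p U V (fm A p u v).
Proof. by move=> hv; exists u, v. Qed.

Section Exist.
Variables (R : realType) (n : nat) (A : 'M[int]_n) (p : nat) (U V : nat -> set 'cV[R]_n).
Variable K : set 'cV[R]_n.
Hypothesis hK : K = \bigcup_(f in thm_ifs A p U V) (f @` K).

Lemma code_exists y : K y -> exists uu vv ys,
  ys 0 = y /\ (forall k, K (ys k)) /\ (forall k, valid p U V (uu k) (vv k)) /\
  (forall k, ys k = fm A p (uu k) (vv k) (ys k.+1)).
Proof.
move=> Ky.
have step : forall z : 'cV[R]_n, exists t : (nat -> 'cV[R]_n) * (nat -> 'cV[R]_n) * 'cV[R]_n,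
    K z -> valid p U V t.1.1 t.1.2 /\ K t.2 /\ z = fm A p t.1.1 t.1.2 t.2.
  move=> z; case: (pselect (K z)) => Kz; last by exists ((fun _ => 0, fun _ => 0), 0).
  move: (Kz); rewrite {1}hK => -[f /ifs_mem [u [v [hv ->]]]] [y' Ky' <-].
  by exists ((u, v), y').
have [h hh] := choice step.
pose ys k := iter k (fun z => (h z).2) y.
have Kys : forall k, K (ys k) by elim=> [|k IH] //=; have [_ []] := hh _ IH.
exists (fun k => (h (ys k)).1.1), (fun k => (h (ys k)).1.2), ys.
split => //; split => //; split => k; first by have [] := hh _ (Kys k).
by case: (hh _ (Kys k)) => _ [_ e]; exact: e.
Qed.
End Exist.

Section Bounds.
Variables (R : realType) (n : nat).

Lemma seq_bound (s : seq 'cV[R]_n) x : x \in s -> `|x| <= \sum_(y <- s) `|y|.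
Proof.
elim: s => //= y s IH; rewrite in_cons big_cons => /orP[/eqP ->|/IH h].
  by rewrite lerDl sumr_ge0.
by apply: (le_trans h); rewrite lerDr.
Qed.

Lemma fin_bound (S : set 'cV[R]_n) : finite_set S ->
  exists M, 0 <= M /\ forall x, S x -> `|x| <= M.
Proof.
move/finite_fsetP => [X ->]; exists (\sum_(y <- finmap.enum_fset X) `|y|); split; first exact: sumr_ge0.
by move=> x /= hx; apply: seq_bound.
Qed.

Lemma fam_bound (W : nat -> set 'cV[R]_n) p :
  (forall l, (1 <= l <= p)%N -> finite_set (W l)) ->
  exists M, 0 <= M /\ forall l x, (1 <= l <= p)%N -> W l x -> `|x| <= M.
Proof.
elim: p => [|p IH] hW.
  by exists 0; split => // l x /andP[h1 h2]; move: (leq_trans h1 h2).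
have [M1 [M10 hM1]] : exists M, 0 <= M /\ forall l x, (1 <= l <= p)%N -> W l x -> `|x| <= M.
  by apply: IH => l /andP[h1 h2]; apply: hW; rewrite h1 (leq_trans h2).
have [M2 [M20 hM2]] := fin_bound (hW p.+1 (leqnn _)).
exists (M1 + M2); split; first by rewrite addr_ge0.
move=> l x /andP[h1 h2] hx; rewrite leq_eqVlt in h2; case/orP: h2 => [/eqP e|h2].
  by subst l; apply: (le_trans (hM2 _ hx)); rewrite lerDr.
by apply: (le_trans (hM1 l x _ hx)); [rewrite h1 -ltnS|rewrite lerDl].
Qed.

Lemma compact_bound (K : set 'cV[R]_n) : compact K ->
  exists M, 0 <= M /\ forall x, K x -> `|x| <= M.
Proof.
move/compact_bounded => [M [Mreal HM]].
exists (`|M| + 1); split; first by rewrite addr_ge0.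
move=> x Kx; apply: (HM (`|M| + 1)) => //.
by apply: (le_lt_trans (real_ler_norm Mreal)); rewrite ltrDl.
Qed.
End Bounds.
Lemma limn_eq0 (R : realType) (n : nat) (f g : nat -> 'cV[R]_n) :
  (f - g) @ \oo --> (0 : 'cV[R]_n) -> limn f = limn g.
Proof.
move=> h; rewrite /lim /lim_in; congr get; apply/funext => l; apply/propext; split => hl.
  apply: (cvg_sub0 _ hl); rewrite -opprB -oppr0; exact: cvgN.
exact: (cvg_sub0 h hl).
Qed.

Lemma toRB (R : realType) (n : nat) (x y : 'cV[int]_n) : toR R (x - y) = toR R x - toR R y.
Proof. by apply/matrixP => i j; rewrite !mxE intrB. Qed.

Lemma toRD (R : realType) (n : nat) (x y : 'cV[int]_n) : toR R (x + y) = toR R x + toR R y.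
Proof. by apply/matrixP => i j; rewrite !mxE intrD. Qed.

Section CodCvg.
Variables (R : realType) (n : nat) (A : 'M[int]_n) (p : nat) (c : R).
Variables (U V : nat -> set 'cV[R]_n).
Hypothesis hd : \det A != 0.
Hypothesis hp : (0 < p)%N.
Local Notation Ai := (invmx (matR R A)).
Hypothesis hc : 0 < c < 1.
Hypothesis hs : forall k (x : 'cV[R]_n), enorm (Ai ^+ k *m x) = c ^+ k * enorm x.
Variables (BU BV BK : R).
Hypotheses (BU0 : 0 <= BU) (BV0 : 0 <= BV).
Hypothesis hBU : forall l x, (1 <= l <= p)%N -> U l x -> `|x| <= BU.
Hypothesis hBV : forall l x, (1 <= l <= p)%N -> V l x -> `|x| <= BV.

Lemma vp_bound (uu vv : nat -> nat -> 'cV[R]_n) (hv : forall k, valid p U V (uu k) (vv k)) k l :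
  (1 <= l <= p)%N -> `|vp vv k l| <= BV.
Proof.
move=> hl; case: k => [|k] /=; first by rewrite normr0.
by apply: (hBV hl); case: (hv k l hl).
Qed.

Lemma dig_l (j : nat) : (0 < j)%N -> (1 <= (j.-1 %% p).+1 <= p)%N.
Proof. by move=> _; rewrite /= ltn_pmod. Qed.

Lemma coding_cvg (uu vv : nat -> nat -> 'cV[R]_n) (ys : nat -> 'cV[R]_n)
  (hv : forall k, valid p U V (uu k) (vv k))
  (hys : forall k, ys k = fm A p (uu k) (vv k) (ys k.+1))
  (hK : forall k, `|ys k| <= BK) :
  PS A p uu vv @ \oo --> ys 0.
Proof.
case/andP: (hc) => c0 c1.
apply: (@PS_cvg _ _ A p c hd hp hc hs uu vv ys hys (BU + BV) (p%:R * (n%:R * BV) + BK)).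
- by rewrite addr_ge0.
- move=> j j0; rewrite /dig; apply: (le_trans (ler_normD _ _)); apply: lerD.
    by apply: (hBU (dig_l j0)); case: (hv (j.-1 %/ p)%N _ (dig_l j0)).
  exact: (vp_bound hv _ (dig_l j0)).
- move=> k; rewrite /TT; apply: (le_trans (ler_normD _ _)); apply: lerD => //.
  apply: (le_trans (ler_norm_sum _ _ _)).
  apply: (@le_trans _ _ (\sum_(1 <= l < p.+1) n%:R * BV)); last first.
    by rewrite sumr_const_nat subn1 /= [X in _ <= X]mulr_natl.
  rewrite big_nat_cond [X in _ <= X]big_nat_cond; apply: ler_sum => l /andP[hl _].
  apply: (le_trans (mx_decay hc hs _ _)); rewrite -mulrA; apply: ler_wpM2l => //.
  apply: (@le_trans _ _ (1 * BV)); last by rewrite mul1r.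
  apply: ler_pM => //; first by rewrite exprn_ge0 // ltW.
    by rewrite exprn_ile1 // ltW.
  exact: (vp_bound hv).
Qed.
End CodCvg.
Section Uniq.
Variables (R : realType) (n : nat) (A : 'M[int]_n) (p : nat).
Variables (U V : nat -> set 'cV[R]_n).
Variables (D : set 'cV[int]_n) (alpha : 'cV[R]_n) (a beta : nat -> 'cV[int]_n).
Hypothesis hp : (0 < p)%N.
Local Notation Ai := (invmx (matR R A)).
Hypothesis hrep : is_repr A (set_diff D) a alpha.
Hypothesis huniq : forall e, is_repr A (set_diff D) e alpha -> forall j, (0 < j)%N -> e j = a j.
Hypothesis hU1 : forall j, (1 <= j <= p)%N ->
     [set toR R (d - beta j) | d in D `&` set_translate D (a j)] = U j.
Hypothesis hUV : forall j l, (p < j)%N -> (1 <= l <= p)%N -> j = l %[mod p] ->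
     [set toR R (d - beta j) | d in D `&` set_translate D (a j)]
       = mink_sum (U l) (V l).

Lemma dig_mem (uu vv : nat -> nat -> 'cV[R]_n) (hv : forall k, valid p U V (uu k) (vv k)) j :
  (0 < j)%N -> exists d, (D `&` set_translate D (a j)) d /\ dig p uu vv j = toR R (d - beta j).
Proof.
move=> j0.
set k := (j.-1 %/ p)%N; set l := (j.-1 %% p).+1.
have hl : (1 <= l <= p)%N by rewrite /l /= ltn_pmod.
have hj : j = (k * p + l)%N by rewrite /k /l addnS -divn_eq prednK.
suff : [set toR R (d - beta j) | d in D `&` set_translate D (a j)] (dig p uu vv j).
  by case=> d hd <-; exists d.
case: (hv k l hl) => hu hvv.
rewrite -/k -/l /dig -/k -/l.
case: k hj hu hvv => [|k] hj hu hvv.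
  rewrite hU1; last by rewrite hj mul0n add0n.
  by rewrite hj mul0n add0n /= addr0.
rewrite (hUV (l := l)) //.
  rewrite /mink_sum /=; exists (uu k.+1 l) => //; exists (vv k l) => //; by case: (hv k l hl).
  by rewrite hj mulSn -addnA -[X in (X < _)%N]addn0 ltn_add2l addn_gt0; case/andP: hl => -> _; rewrite orbT.
  by rewrite hj; apply: modnMDl.
Qed.

Lemma dig_eq (uu vv uu' vv' : nat -> nat -> 'cV[R]_n) (x : 'cV[R]_n)
  (hv : forall k, valid p U V (uu k) (vv k)) (hv' : forall k, valid p U V (uu' k) (vv' k)) :
  PS A p uu vv @ \oo --> x -> PS A p uu' vv' @ \oo --> x ->
  forall j, (0 < j)%N -> dig p uu vv j = dig p uu' vv' j.
Proof.
move=> c1 c2.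
have gen : forall uu vv : nat -> nat -> 'cV[R]_n, (forall k, valid p U V (uu k) (vv k)) ->
    {dd : nat -> 'cV[int]_n & forall j, (0 < j)%N ->
      (D `&` set_translate D (a j)) (dd j) /\ dig p uu vv j = toR R (dd j - beta j)}.
  move=> u1 v1 hv1.
  apply: (@choice nat 'cV[int]_n (fun j d => (0 < j)%N ->
      (D `&` set_translate D (a j)) d /\ dig p u1 v1 j = toR R (d - beta j))) => j.
  case: (posnP j) => [->|j0]; first by exists 0.
  by have [d hd] := dig_mem hv1 j0; exists d.
have [dd hdd] := gen _ _ hv; have [dd' hdd'] := gen _ _ hv'.
pose e j := dd j - dd' j + a j.
have he : is_repr A (set_diff D) e alpha.
  split.
    move=> j j0; case: (hdd j j0) => -[Dd _] _; case: (hdd' j j0) => -[_ [d0 Dd0 hd0]] _.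
    exists (dd j) => //; exists d0 => //.
    by rewrite /e -hd0 opprD addrA subrK.
  case: hrep => _ <-; rewrite /piAE; apply: limn_eq0.
  have -> : ((fun N => \sum_(1 <= j < N) Ai ^+ j *m toR R (e j)) -
             (fun N => \sum_(1 <= j < N) Ai ^+ j *m toR R (a j))) =
            PS A p uu vv - PS A p uu' vv'.
    apply/funext => N; rewrite !fctE /PS -!sumrB.
    rewrite big_nat_cond [RHS]big_nat_cond; apply: eq_bigr => j /andP[/andP[j0 _] _].
    rewrite -!mulmxBr; congr (_ *m _).
    case: (hdd j j0) => _ ->; case: (hdd' j j0) => _ ->.
    by rewrite /e toRD !toRB addrK opprB addrA subrK.
  by rewrite -(subrr x); apply: cvgB.
move=> j j0; have := huniq he j0; rewrite /e => /(congr1 (fun z => z - a j)).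
rewrite addrK subrr => /eqP; rewrite subr_eq0 => /eqP hq.
by case: (hdd j j0) => _ ->; case: (hdd' j j0) => _ ->; rewrite hq.
Qed.
End Uniq.

Unset Implicit Arguments. Set Strict Implicit.

Theorem mainTheorem8 (R : realType) (n : nat) (A : 'M[int]_n)
    (D : set 'cV[int]_n) (alpha : 'cV[R]_n) (a : nat -> 'cV[int]_n)
    (p : nat) (U V : nat -> set 'cV[R]_n) (beta : nat -> 'cV[int]_n) :
  \det A != 0 ->
  is_similarity (invmx (matR R A)) ->
  (exists Dc : set 'cV[int]_n, complete_residue_system A Dc /\ D `<=` Dc) ->
  @TAE R n A (set_diff D) alpha ->
  @is_repr R n A (set_diff D) a alpha ->
  (forall e, is_repr A (set_diff D) e alpha -> forall j, (0 < j)%N -> e j = a j) ->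
  (0 < p)%N ->
  (forall l, (1 <= l <= p)%N -> finite_set (U l) /\ finite_set (V l)) ->
  (forall j, (0 < j)%N -> D (beta j)) ->
  (forall j, (1 <= j <= p)%N ->
     [set toR R (d - beta j) | d in D `&` set_translate D (a j)] = U j) ->
  (forall j l, (p < j)%N -> (1 <= l <= p)%N -> j = l %[mod p] ->
     [set toR R (d - beta j) | d in D `&` set_translate D (a j)]
       = mink_sum (U l) (V l)) ->
  open_set_condition (thm_ifs A p U V) ->
  strong_separation_condition (thm_ifs A p U V).
Proof.
move=> hd [c [hc hsim]] _ _ hrep huniq hp hfin _ hU1 hUV.
move=> [V0 [[w0 Vw0] [_ [_ [hsub hdisj]]]]].
have hs := sim_decay hsim.
have [BU [BU0 hBU]] := @fam_bound R n U p (fun l h => (hfin l h).1).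
have [BV [BV0 hBV]] := @fam_bound R n V p (fun l h => (hfin l h).2).
move=> K [Kc [K0 hK]] f g Ff Fg fg.
have [BK [BK0 hBK]] := compact_bound Kc.
apply/seteqP; split => // x [[y Ky fy] [z Kz gz]].
have [u [v [hv hf]]] := ifs_mem Ff; have [u' [v' [hv' hg]]] := ifs_mem Fg.
have [uu [vv [ys [ys0 [Kys [hvv hys]]]]]] := code_exists hK Ky.
have [uu' [vv' [ys' [ys0' [Kys' [hvv' hys']]]]]] := code_exists hK Kz.
have Kx : K x by rewrite hK; exists f => //; exists y.
pose UU k := if k is k'.+1 then uu k' else u.
pose VV k := if k is k'.+1 then vv k' else v.
pose YS k := if k is k'.+1 then ys k' else x.
pose UU' k := if k is k'.+1 then uu' k' else u'.
pose VV' k := if k is k'.+1 then vv' k' else v'.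
pose YS' k := if k is k'.+1 then ys' k' else x.
have hVV : forall k, valid p U V (UU k) (VV k) by case.
have hVV' : forall k, valid p U V (UU' k) (VV' k) by case.
have hYS : forall k, YS k = fm A p (UU k) (VV k) (YS k.+1).
  by case => [|k] /=; [rewrite ys0 -fy hf | exact: hys].
have hYS' : forall k, YS' k = fm A p (UU' k) (VV' k) (YS' k.+1).
  by case => [|k] /=; [rewrite ys0' -gz hg | exact: hys'].
have c1 : PS A p UU VV @ \oo --> x.
  rewrite -[x]/(YS 0); apply: (coding_cvg hd hp hc hs BU0 BV0 hBU hBV hVV hYS).
  by case => [|k] /=; apply: hBK.
have c2 : PS A p UU' VV' @ \oo --> x.
  rewrite -[x]/(YS' 0); apply: (coding_cvg hd hp hc hs BU0 BV0 hBU hBV hVV' hYS').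
  by case => [|k] /=; apply: hBK.
have hde := dig_eq hp hrep huniq hU1 hUV hVV hVV' c1 c2.
have d1 l : (1 <= l <= p)%N -> dig p UU VV l = u l /\ dig p UU' VV' l = u' l.
  move=> hl; have := @dig_block _ _ p hp UU VV 0 l hl; have := @dig_block _ _ p hp UU' VV' 0 l hl.
  by rewrite mul0n add0n /= !addr0 => -> ->.
have d2 l : (1 <= l <= p)%N ->
    dig p UU VV (p + l) = uu 0 l + v l /\ dig p UU' VV' (p + l) = uu' 0 l + v' l.
  move=> hl; have := @dig_block _ _ p hp UU VV 1 l hl; have := @dig_block _ _ p hp UU' VV' 1 l hl.
  by rewrite mul1n /= => -> ->.
have eu l : (1 <= l <= p)%N -> u l = u' l.
  move=> hl; have [e1 e2] := d1 l hl; rewrite -e1 -e2; apply: hde.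
  by case/andP: hl.
have ev l : (1 <= l <= p)%N -> uu 0 l + v l = uu' 0 l + v' l.
  move=> hl; have [e1 e2] := d2 l hl; rewrite -e1 -e2; apply: hde.
  by rewrite addn_gt0 hp.
pose h1 := fm A p (uu 0) (vv 0).
pose h2 := fm A p (uu' 0) (vv 0).
have vh2 : valid p U V (uu' 0) (vv 0).
  by move=> l hl; split; [case: (hvv' 0 l hl) | case: (hvv 0 l hl)].
have E : f (h1 w0) = g (h2 w0).
  rewrite hf hg /h1 /h2 !fm_comp //.
  congr (_ + (_ + _ + _)); apply: eq_big_nat => l hl.
    by rewrite eu.
  by rewrite addrC ev // addrC.
have Vh1 : V0 (h1 w0) by apply: hsub; exists h1; [exact: fm_mem | exists w0].
have Vh2 : V0 (h2 w0) by apply: hsub; exists h2; [exact: fm_mem | exists w0].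
have := hdisj f g Ff Fg fg; move/seteqP => [/(_ (f (h1 w0))) H _]; apply: H; split.
  by exists (h1 w0).
by rewrite E; exists (h2 w0).
Qed.
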